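(* Let $k\ge 3$ and let $D$ be a digraph on $n$ vertices with $\delta^0(D)\ge\lceil (n+k)/2\rceil-1$. Let $S=(s_1,\dots,s_k)$ be a sequence of distinct vertices of $D$, let $C$ be a longest $S$-cycle in $D$, and suppose $C$ is not Hamiltonian. Let $H$ be the subdigraph of $D$ induced by $V(D)\setminus V(C)$. Then $H$ is Hamiltonian connected and $d^-_H(x)+d^+_H(y)\ge |H|+k-2$ for all (not necessarily distinct) vertices $x,y\in H$. Moreover, every digraph obtained from $H$ by deleting at most $2$ vertices is strongly connected, and $k\le |H|\le \lfloor (n-k)/2\rfloor$.
   Context: Digraphs have no loops and at most one edge in each direction between any two vertices; paths and cycles are directed. $\delta^0(D)=\min\{\delta^+(D),\delta^-(D)\}$. An $S$-cycle is a directed cycle in $D$ which encounters $s_1,\dots,s_k$ in this order. For $x\in H$, $d^+_H(x)$ and $d^-_H(x)$ denote the out- and indegree of $x$ within $H$. A digraph is strongly connected if for every ordered pair $x,y$ of vertices there is a directed $x$-$y$ path, and Hamiltonian connected if for every ordered pair of distinct vertices $x,y$ there is a directed Hamilton path from $x$ to $y$. *)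

(* Defs.v *)
(* A digraph on a finite vertex type T is an irreflexive
   relation e : rel T (e x y = there is an edge x -> y). *)
From mathcomp Require Import all_boot.
Set Implicit Arguments. Unset Strict Implicit. Unset Printing Implicit Defensive.

Section Digraph.
Variables (T : finType) (e : rel T).

Definition loopless := forall x : T, ~~ e x x.

Definition outdeg (x : T) := #|[set y | e x y]|.
Definition indeg (x : T) := #|[set y | e y x]|.

Definition outdeg_in (A : {set T}) (x : T) := #|[set y in A | e x y]|.
Definition indeg_in (A : {set T}) (x : T) := #|[set y in A | e y x]|.

Definition min_semideg_ge (d : nat) := forall x : T, d <= outdeg x /\ d <= indeg x.

Definition dcycle (c : seq T) := [/\ 2 <= size c, uniq c & cycle e c].

(* an S-cycle: a directed cycle meeting s_1,...,s_k in this cyclic order *)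
Definition S_cycle (S c : seq T) := dcycle c /\ exists i, subseq S (rot i c).

Definition longest_S_cycle (S c : seq T) :=
  S_cycle S c /\ forall c', S_cycle S c' -> size c' <= size c.

Definition ham_connected_on (A : {set T}) :=
  forall x y, x \in A -> y \in A -> x != y ->
    exists p : seq T, [/\ path e x p, last x p = y, uniq (x :: p)
                        & forall z, (z \in x :: p) = (z \in A)].

Definition strong_on (B : {set T}) :=
  forall u v, u \in B -> v \in B ->
    exists p : seq T, [/\ path e u p, last u p = v & all (mem B) p].
End Digraph.

(* Main.v *)
Require Import Defs.
From mathcomp Require Import all_boot.
From mathcomp Require Import zify.
From Stdlib Require Import Classical.
Set Implicit Arguments. Unset Strict Implicit. Unset Printing Implicit Defensive.


Lemma ex_max (P : nat -> Prop) N : (exists m, P m) -> (forall m, P m -> m <= N) ->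
  exists m, P m /\ forall m', P m' -> m' <= m.
Proof.
move=> [m0 Pm0] bnd; apply: NNPP => H.
have K j : exists m, P m /\ j <= m.
  elim: j => [|j [m [Pm jm]]]; first by exists m0.
  case: (classic (forall m', P m' -> m' <= m)) => [Hm|Hm]; first by case: H; exists m.
  have [m' Hm'] := not_all_ex_not _ _ Hm.
  have [Pm' lt] := imply_to_and _ _ Hm'.
  by exists m'; split=> //; apply: leq_ltn_trans jm _; rewrite ltnNge; apply/negP.
have [m [Pm lm]] := K N.+1.
by have := bnd _ Pm; rewrite leqNgt lm.
Qed.

Section Cyc.
Variables (T : eqType).

Lemma iter_next (i : T) b t : uniq (i :: b) -> 0 < t <= (size b).+1 ->
  iter t (next (i :: b)) i = nth i (rcons b i) t.-1.
Proof.
move=> U; elim: t => [|t IH] //; case: t IH => [|t] IH /andP[_ ht].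
  change (next (i :: b) i = nth i (rcons b i) 0).
  rewrite next_nth mem_head /= eqxx; by case: b {U ht IH}.
have tb : t < size b by [].
rewrite iterS IH; last by rewrite /= ltnW.
rewrite [t.+1.-1]/= [t.+2.-1]/= nth_rcons tb.
case/andP: U => ib Ub.
have nb : nth i b t \in b by rewrite mem_nth.
rewrite next_nth inE nb orbT /=.
have -> : (i == nth i b t) = false by apply/negbTE; apply: contra ib => /eqP ->.
rewrite index_uniq // nth_rcons.
case: ltngtP => // [Hlt|->]; last by rewrite nth_default.
by move: Hlt; rewrite ltnS leqNgt tb.
Qed.

Lemma rot_i (s : seq T) i : i \in s -> exists b, rot (index i s) s = i :: b.
Proof. by move=> /rot_index ->; eexists. Qed.

Lemma next_orbit (s : seq T) x y : uniq s -> x \in s -> y \in s ->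
  exists2 t, 0 < t <= size s & iter t (next s) x = y.
Proof.
move=> U xs ys; have [b E] := rot_i xs.
have U1 : uniq (x :: b) by rewrite -E rot_uniq.
have S1 : size s = (size b).+1 by rewrite -(size_rot (index x s)) E.
have it t : iter t (next s) x = iter t (next (x :: b)) x.
  by apply: eq_iter => v; rewrite -E next_rot.
have : y \in x :: b by rewrite -E mem_rot.
rewrite inE => /orP[/eqP->|yb].
  exists (size s); first by rewrite S1 ltn0Sn leqnn.
  by rewrite it S1 iter_next //= nth_rcons ltnn eqxx.
exists (index y b).+1; first by rewrite S1; apply/andP; split => //; rewrite ltnS index_size.
rewrite it iter_next //=; last by rewrite ltnS index_size.
by rewrite nth_rcons index_mem yb nth_index.
Qed.

Variable f : rel T.

Lemma ear s0 i t a p : uniq s0 -> cycle f s0 -> i \in s0 -> 0 < t <= size s0 ->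
  uniq (a :: p) -> (forall v, v \in a :: p -> v \notin s0) -> f i a -> path f a p ->
  f (last a p) (iter t (next s0) i) ->
  exists s, [/\ uniq s, cycle f s, size s = size s0 - t + 1 + size (a :: p)
              & {subset s <= s0 ++ a :: p}].
Proof.
move=> U0 C0 i0 ht Ua dis fia pa fl.
have [b E] := rot_i i0.
have U1 : uniq (i :: b) by rewrite -E rot_uniq.
have C1 : cycle f (i :: b) by rewrite -E rot_cycle.
have S1 : size s0 = (size b).+1 by rewrite -(size_rot (index i s0)) E.
have M1 v : v \in i :: b -> v \in s0 by rewrite -E mem_rot.
have it : iter t (next s0) i = nth i (rcons b i) t.-1.
  rewrite -iter_next // -?S1 //; apply: eq_iter => v; by rewrite -E next_rot.
rewrite it in fl.
case/andP: ht => t0 tS.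
have tl : t.-1 < size (rcons b i) by rewrite size_rcons -S1; clear it fl; case: t t0 tS.
set D := drop t.-1 (rcons b i).
have ED : D = nth i (rcons b i) t.-1 :: drop t.-1.+1 (rcons b i) by rewrite /D (drop_nth i).
set j := nth i (rcons b i) t.-1 in ED fl.
set D' := drop t.-1.+1 (rcons b i) in ED.
have pD : path f j D'.
  move: C1; rewrite /cycle -(cat_take_drop t.-1 (rcons b i)) -/D ED cat_path.
  by case/andP=> _ /= /andP[].
have lD : last j D' = i.
  have := last_rcons i b i; rewrite -(cat_take_drop t.-1 (rcons b i)) -/D ED last_cat /=.
  by [].
have MD v : v \in D -> v \in s0.
  by move=> /mem_drop; rewrite mem_rcons => /M1.
exists (D ++ a :: p); split.
- rewrite cat_uniq Ua andbT; apply/andP; split.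
    by apply: drop_uniq; rewrite rcons_uniq; exact: U1.
  apply/hasPn => v /dis /= vn; apply: contra vn; exact: MD.
- rewrite ED /= rcons_cat /= cat_path pD /= lD fia /= rcons_path pa /=.
  by [].
- rewrite size_cat /= size_drop size_rcons S1; move: tS t0; rewrite S1; clear; lia.
- move=> v; rewrite mem_cat => /orP[/MD|]; by rewrite mem_cat => ->; rewrite ?orbT.
Qed.
End Cyc.


Section Fin.
Variable T : finType.
Implicit Types X Y Z : {set T}.

Lemma card_disj_sub X Y Z : X \subset Z -> Y \subset Z -> [disjoint X & Y] -> #|X| + #|Y| <= #|Z|.
Proof.
move=> XZ YZ D; rewrite -cardsUI (disjoint_setI0 D) cards0 addn0.
by apply: subset_leq_card; rewrite subUset XZ YZ.
Qed.

Lemma card_U_le X Y : #|X :|: Y| <= #|X| + #|Y|.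
Proof. by rewrite -cardsUI leq_addr. Qed.

Lemma card_seq (s : seq T) : uniq s -> #|[set v in s]| = size s.
Proof. by move=> U; rewrite cardsE; apply/card_uniqP. Qed.

Lemma gap_count (s : seq T) (I J : {set T}) q : uniq s ->
  I \subset [set v in s] -> J \subset [set v in s] -> I != set0 -> J != set0 -> 0 < q ->
  (forall i t, i \in I -> 0 < t <= q -> t <= size s -> iter t (next s) i \notin J) ->
  #|I| + #|J| + q <= (size s).+1.
Proof.
move=> Us IS JS I0 J0 q0 gap.
set sig := next s.
have inj : injective sig by apply: can_inj (prev_next Us).
pose U := fix U t := if t is t'.+1 then sig @: (I :|: U t') else set0.
have USs t : U t \subset [set v in s].
  elim: t => [|t IH] /=; first by rewrite sub0set.
  apply/subsetP => v /imsetP[w wIU ->]; rewrite inE mem_next.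
  by case/setUP: wIU => [/(subsetP IS)|/(subsetP IH)]; rewrite inE.
have Umono t : U t \subset U t.+1.
  elim: t => [|t IH]; first by rewrite sub0set.
  by apply: imsetS; apply: setUS.
have Uiter t v : v \in U t -> exists i t', [/\ i \in I, 0 < t' <= t & v = iter t' sig i].
  elim: t v => [|t IH] v /=; first by rewrite inE.
  case/imsetP => w /setUP[wI|/IH[i [t' [iI ht ->]]]] ->.
    by exists w, 1; split.
  by exists i, t'.+1; split => //; move: ht; clear; lia.
have closed X : X \subset [set v in s] -> X != set0 -> sig @: X \subset X -> X = [set v in s].
  move=> XS /set0Pn[x xX] cl; apply/eqP; rewrite eqEsubset XS /=.
  have xs : x \in s by have := subsetP XS _ xX; rewrite inE.
  apply/subsetP => y; rewrite inE => ys.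
  have [t _ <-] := next_orbit Us xs ys.
  elim: t => [|t IH] //=; apply: (subsetP cl); exact: imset_f.
have I1 : 0 < #|I| by rewrite card_gt0.
have J1 : 0 < #|J| by rewrite card_gt0.
have Ucard t : 0 < t -> U t = [set v in s] \/ #|I| + t - 1 <= #|U t|.
  elim: t => [|t IH] // _; case: t IH => [|t] IH.
    by right; rewrite /= setU0 card_imset //; lia.
  case: (IH isT) => [full|ge].
    left; apply/eqP; rewrite eqEsubset USs -full; exact: Umono.
  case: (boolP (I \subset U t.+1)) => [sub|nsub].
    have E : U t.+2 = sig @: U t.+1 by rewrite /= (setUidPr sub).
    have E2 : U t.+1 = U t.+2.
      by apply/eqP; rewrite eqEcard Umono E card_imset //= leqnn.
    have : U t.+1 = [set v in s].
      apply: closed; [exact: USs| |by rewrite -E -E2].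
      by rewrite -card_gt0; lia.
    by rewrite E2 => ->; left.
  right; have -> : U t.+2 = sig @: (I :|: U t.+1) by []. rewrite card_imset //.
  have : #|U t.+1| < #|I :|: U t.+1|.
    apply: proper_card; rewrite properEneq subsetUr andbT.
    by apply: contra nsub => /eqP E; rewrite E subsetUl.
  move: ge; clear; lia.
set t0 := minn q (size s).
have s0 : 0 < size s.
  case/set0Pn: I0 => x /(subsetP IS); rewrite inE; by case: s {Us IS JS gap sig inj U USs Umono Uiter closed Ucard t0}.
have t00 : 0 < t0 by rewrite /t0; lia.
have dis : [disjoint U t0 & J].
  rewrite disjoint_subset; apply/subsetP => v /Uiter[i [t' [iI ht ->]]]; rewrite inE /=.
  apply: gap => //; rewrite /t0 in ht; lia.
case: (Ucard t0 t00) => [full|ge].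
  case/set0Pn: J0 => j jJ; have := disjointFl dis jJ; rewrite full.
  by have := subsetP JS _ jJ => ->.
have := card_disj_sub (USs t0) JS dis; rewrite card_seq //.
move: ge I1 J1; rewrite /t0; clear; lia.
Qed.
End Fin.


Section Paths.
Variables (T : eqType) (f : rel T).

Lemma splitE (s : seq T) v : v \in s -> exists p1 p2, s = p1 ++ v :: p2.
Proof. by case/splitPr => p1 p2; exists p1, p2. Qed.

Lemma suffix_path z p v : path f z p -> uniq (z :: p) -> v \in z :: p ->
  exists p1 p2, [/\ z :: p = p1 ++ v :: p2, path f v p2, last v p2 = last z p,
                    uniq (v :: p2) & {subset v :: p2 <= z :: p}].
Proof.
move=> pz U /splitE[p1 [p2 E]]; exists p1, p2; split => //.
- case: p1 E => [[Ez Ep]|a p1 [Ea Ep]]; subst => //; move: pz; rewrite cat_path => /andP[_].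
  by case/andP.
- case: p1 E => [[Ez Ep]|a p1 [Ea Ep]]; subst => //; by rewrite last_cat.
- by move: U; rewrite E cat_uniq => /and3P[_ _].
- by move=> x xv; rewrite E mem_cat xv orbT.
Qed.

Lemma prefix_path z p v : path f z p -> uniq (z :: p) -> v \in z :: p ->
  exists p', [/\ path f z p', last z p' = v, uniq (z :: p') & {subset z :: p' <= z :: p}].
Proof.
move=> pz U /splitE[p1 [p2 E]].
case: p1 E => [[Ez Ep]|a p1 [Ea Ep]].
  by subst; exists [::]; split => // x; rewrite inE => /eqP->; rewrite mem_head.
subst a; exists (rcons p1 v); split.
- by move: pz; rewrite Ep cat_path rcons_path => /andP[-> /=] /andP[-> _].
- by rewrite last_rcons.
- apply: (subseq_uniq _ U); rewrite Ep -rcons_cons -cats1 -cat_cons.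
  by apply: cat_subseq; rewrite //= ?eqxx ?sub0seq.
- by move=> x; rewrite -rcons_cons mem_rcons Ep -cat_cons mem_cat !inE => /orP[->|->]; rewrite ?orbT.
Qed.
End Paths.

Section HT.
Variables (T : finType) (f : rel T) (A : {set T}).
Hypothesis floop : forall v, ~~ f v v.
Hypothesis Adeg : forall a b, a \in A -> b \in A -> #|A| <= indeg_in f A a + outdeg_in f A b.

Lemma cardsDsub (X Y : {set T}) : Y \subset X -> #|X :\: Y| = #|X| - #|Y|.
Proof. by move=> YX; rewrite cardsD (setIidPr YX). Qed.

Theorem ham_cycle : exists s, [/\ uniq s, cycle f s & forall v, (v \in s) = (v \in A)].
Proof.
pose Pc m := exists s, [/\ uniq s, cycle f s, {subset s <= A} & size s = m].
have [L [[s0 [U0 C0 S0 L0]] Lmax]] : exists m, Pc m /\ forall m', Pc m' -> m' <= m.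
  apply: (@ex_max _ #|T|); first by exists 0, [::].
  by move=> m [s [U _ _ <-]]; rewrite -card_seq // max_card.
case: (classic (forall v, v \in A -> v \in s0)) => [all|].
  by exists s0; split => // v; apply/idP/idP => [/S0|/all].
move=> H0; have [r0 H1] := not_all_ex_not _ _ H0; have [r0A r0s] := imply_to_and _ _ H1; clear H0 H1.
set R := A :\: [set v in s0].
have RE v : (v \in R) = (v \in A) && (v \notin s0) by rewrite !inE andbC.
pose Pp m := exists z p, [/\ uniq (z :: p), path f z p, {subset z :: p <= R} & size (z :: p) = m].
have [q [[z [p [UQ pQ SQ qE]]] Qmax]] : exists m, Pp m /\ forall m', Pp m' -> m' <= m.
  apply: (@ex_max _ #|T|).
    by exists 1, r0, [::]; split => // v; rewrite inE => /eqP->; rewrite RE r0A; apply/negP.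
  by move=> m [z [p [U _ _ <-]]]; rewrite -card_seq // max_card.
set Q := z :: p in UQ SQ qE.
set w := last z p.
have zR : z \in R by apply: SQ; rewrite mem_head.
have wR : w \in R by apply: SQ; exact: mem_last.
have RA v : v \in R -> v \in A by rewrite RE => /andP[].
have Rs v : v \in R -> v \notin s0 by rewrite RE => /andP[].
have cardA : #|A| = L + #|R|.
  rewrite /R cardsDsub; last by apply/subsetP => v; rewrite inE => /S0.
  rewrite card_seq // L0 subnKC //; rewrite -L0 -card_seq //.
  by apply: subset_leq_card; apply/subsetP => v; rewrite inE => /S0.
have qR : q <= #|R|.
  rewrite -qE -card_seq //; apply: subset_leq_card; apply/subsetP => v; rewrite in_set; exact: SQ.
have q0 : 0 < q by rewrite -qE.
have Qin v : v \in R -> f v z -> v \in Q.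
  move=> vR fvz; apply/negPn/negP => vQ.
  have : Pp q.+1.
    exists v, Q; split.
    - by apply/andP; split.
    - by rewrite /= fvz pQ.
    - by move=> x; rewrite inE => /orP[/eqP->|/SQ].
    - by rewrite -qE.
  by move/Qmax; rewrite ltnn.
have Qout v : v \in R -> f w v -> v \in Q.
  move=> vR fwv; apply/negPn/negP => vQ.
  have : Pp q.+1.
    exists z, (rcons p v); split.
    - by rewrite -rcons_cons rcons_uniq vQ.
    - by rewrite rcons_path pQ fwv.
    - by move=> x; rewrite -rcons_cons mem_rcons inE => /orP[/eqP->|/SQ].
    - by rewrite /= size_rcons -qE.
  by move/Qmax; rewrite ltnn.
set I := [set v | (v \in s0) && f v z].
set J := [set v | (v \in s0) && f w v].
have cQ x : x \in Q -> #|[set v in Q] :\ x| = q.-1.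
  by move=> xQ; have := cardsD1 x [set v in Q]; rewrite inE xQ card_seq // qE => ->.
have indz : indeg_in f A z <= #|I| + q.-1.
  rewrite /indeg_in -(cQ z (mem_head _ _)); apply: leq_trans (card_U_le _ _).
  apply: subset_leq_card; apply/subsetP => y; rewrite inE => /andP[yA fyz].
  case: (boolP (y \in s0)) => ys; first by apply/setUP; left; rewrite inE ys fyz.
  apply/setUP; right; rewrite in_setD1 in_set (Qin y) ?andbT ?RE ?yA ?ys //; apply/negP => /eqP E; move: fyz; rewrite E.
  by move/negP: (floop z).
have outw : outdeg_in f A w <= #|J| + q.-1.
  rewrite /outdeg_in -(cQ w (mem_last _ _)); apply: leq_trans (card_U_le _ _).
  apply: subset_leq_card; apply/subsetP => y; rewrite inE => /andP[yA fwy].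
  case: (boolP (y \in s0)) => ys; first by apply/setUP; left; rewrite inE ys fwy.
  apply/setUP; right; rewrite in_setD1 in_set (Qout y) ?andbT ?RE ?yA ?ys //; apply/negP => /eqP E; move: fwy; rewrite E.
  by move/negP: (floop w).
have earC i t a p' : i \in s0 -> 0 < t <= L -> uniq (a :: p') -> {subset a :: p' <= R} ->
    path f a p' -> f i a -> f (last a p') (iter t (next s0) i) -> t <= size (a :: p') -> False.
  move=> is0 ht Ua Sa pa fia fl tle.
  have ht' : 0 < t <= size s0 by rewrite L0.
  have [s [Us Cs Ss SUs]] := ear U0 C0 is0 ht' Ua (fun v vi => Rs v (Sa v vi)) fia pa fl.
  have : Pc (size s).
    exists s; split => // v /SUs; rewrite mem_cat => /orP[/S0|/Sa/RA] //.
  move/Lmax; rewrite Ss L0; move: ht tle; rewrite -L0; clear; lia.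
have sLQ v : v \in s0 -> v \notin Q by move=> vs; apply/negP => /SQ /Rs; rewrite vs.
have L0' c : c \in s0 -> 0 < L by rewrite -L0; case: (s0).
have noI : I = set0 -> False.
  move=> I0.
  have outb b : b \in A -> #|A| - q.-1 <= outdeg_in f A b.
    move=> bA; have := Adeg (RA _ zR) bA; move: indz; rewrite I0 cards0; clear; lia.
  have hitc c : c \in s0 -> exists v, [/\ v \in Q, v != z & f c v].
    move=> cs; apply: NNPP => nh.
    have sub : [set y in A | f c y] \subset ([set v in s0] :\ c) :|: (R :\: [set v in Q]).
      apply/subsetP => y; rewrite inE => /andP[yA fcy].
      case: (boolP (y \in s0)) => ys.
        apply/setUP; left; rewrite in_setD1 in_set ys andbT.
        by apply/negP => /eqP E; move: fcy; rewrite E; move/negP: (floop c).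
      apply/setUP; right; rewrite in_setD RE yA ys !andbT in_set; apply/negP => yQ; apply: nh; exists y; split => //.
      apply/negP => /eqP E; have : c \in I by rewrite inE cs -E fcy.
      by rewrite I0 inE.
    have := leq_trans (subset_leq_card sub) (card_U_le _ _).
    rewrite (@cardsDsub R); last by apply/subsetP => v; rewrite in_set; exact: SQ.
    have := cardsD1 c [set v in s0]; rewrite inE cs card_seq // L0 card_seq // qE => E.
    have := outb c (S0 _ cs); rewrite /outdeg_in cardA; move: E qR L0; clear; lia.
  have J0 u : u \in s0 -> ~~ f w u.
    move=> us; apply/negP => fwu.
    set c := prev s0 u.
    have cs : c \in s0 by rewrite mem_prev.
    have Ec : next s0 c = u by rewrite next_prev.
    have [v [vQ vz fcv]] := hitc c cs.
    have [p1 [p2 [_ pv lv Uv Sv]]] := suffix_path pQ UQ vQ.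
    apply: (earC c 1 v p2) => //; first by rewrite (L0' c cs).
      by move=> x /Sv /SQ.
    by rewrite lv /= Ec.
  set N := [set y in A | f w y].
  have NQ : N \subset [set v in Q].
    apply/subsetP => y; rewrite /N in_set => /andP[yA fwy]; rewrite in_set.
    case: (boolP (y \in s0)) => ys; first by move: (J0 y ys); rewrite fwy.
    by apply: Qout => //; rewrite RE yA ys.
  have Nc : #|A| - q.-1 <= #|N| by exact: outb (RA _ wR).
  have [v0 v0N] : exists v0, v0 \in N.
    apply/card_gt0P; move: Nc; rewrite cardA; move: qR q0; clear; lia.
  case: (@arg_minnP T v0 (mem N) (fun v => index v Q) v0N) => v vN vmin.
  have vQ : v \in Q by have := subsetP NQ _ vN; rewrite in_set.
  have [p1 [p2 [EQ pv lv Uv Sv]]] := suffix_path pQ UQ vQ.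
  have vN2 : v \in N := vN.
  have fwv : f w v by move: vN2; rewrite /N in_set => /andP[].
  have : Pc (size (v :: p2)).
    exists (v :: p2); split => //.
    - by rewrite /cycle rcons_path pv lv fwv.
    - by move=> x /Sv /SQ /RA.
  move/Lmax.
  have sub : w |: N \subset [set x in v :: p2].
    apply/subsetP => y; rewrite in_setU1 in_set => /orP[/eqP->|yN]; first by rewrite /w -lv mem_last.
    have yQ : y \in Q by have := subsetP NQ _ yN; rewrite in_set.
    move: yQ; rewrite /Q EQ mem_cat => /orP[yp1|] //.
    have := vmin y yN; rewrite /Q EQ !index_cat yp1.
    have -> : (v \in p1) = false.
      by apply/negbTE; move: UQ; rewrite /Q EQ cat_uniq => /and3P[_ /hasPn H _]; apply: H; rewrite mem_head.
    by rewrite /= eqxx addn0 leqNgt index_mem yp1.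
  have := subset_leq_card sub; rewrite cardsU1 card_seq //.
  have -> : w \notin N by rewrite inE negb_and floop orbT.
  move: Nc; rewrite cardA; move: qR q0; clear; lia.
have noJ : J = set0 -> False.
  move=> J0; apply: noI.
  have inb b : b \in A -> #|A| - q.-1 <= indeg_in f A b.
    move=> bA; have := Adeg bA (RA _ wR); move: outw; rewrite J0 cards0; clear; lia.
  apply/eqP; rewrite -subset0; apply/subsetP => i; rewrite inE => /andP[is0 fiz]; exfalso.
  set c := next s0 i.
  have cs : c \in s0 by rewrite mem_next.
  have [v [vQ vw fvc]] : exists v, [/\ v \in Q, v != w & f v c].
    apply: NNPP => nh.
    have sub : [set y in A | f y c] \subset ([set v in s0] :\ c) :|: (R :\: [set v in Q]).
      apply/subsetP => y; rewrite inE => /andP[yA fyc].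
      case: (boolP (y \in s0)) => ys.
        apply/setUP; left; rewrite in_setD1 in_set ys andbT.
        by apply/negP => /eqP E; move: fyc; rewrite E; move/negP: (floop c).
      apply/setUP; right; rewrite in_setD RE yA ys !andbT in_set; apply/negP => yQ; apply: nh; exists y; split => //.
      apply/negP => /eqP E; have : c \in J by rewrite inE cs -E fyc.
      by rewrite J0 inE.
    have := leq_trans (subset_leq_card sub) (card_U_le _ _).
    rewrite (@cardsDsub R); last by apply/subsetP => x; rewrite in_set; exact: SQ.
    have := cardsD1 c [set v in s0]; rewrite inE cs card_seq // L0 card_seq // qE => E.
    have := inb c (S0 _ cs); rewrite /indeg_in cardA; move: E qR L0; clear; lia.
  have [p' [pp lp Up Sp]] := prefix_path pQ UQ vQ.
  apply: (earC i 1 z p') => //; first by rewrite (L0' i is0).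
  - by move=> x /Sp /SQ.
  - by rewrite lp.
have I0 : I != set0 by apply/negP => /eqP.
have J0 : J != set0 by apply/negP => /eqP.
have := gap_count U0 _ _ I0 J0 q0.
have IS : I \subset [set v in s0] by apply/subsetP => x; rewrite !inE => /andP[].
have JS : J \subset [set v in s0] by apply/subsetP => x; rewrite !inE => /andP[].
move=> /(_ IS JS) H.
have : #|I| + #|J| + q <= (size s0).+1.
  apply: H => i t iI ht tL; apply/negP; rewrite inE => /andP[_ fwi].
  move: iI; rewrite inE => /andP[is0 fiz].
  apply: (earC i t z p) => //; first by rewrite -L0 tL andbT; case/andP: ht.
  by rewrite qE; case/andP: ht.
have := Adeg (RA _ zR) (RA _ wR).
move: indz outw; rewrite cardA L0; move: qR q0; clear; lia.
Qed.
End HT.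


Section Restrict.
Variables (T : finType) (e : rel T).
Definition resrel (B : {set T}) := [rel a b | (a \in B) && (b \in B) && e a b].

Lemma path_res (B : {set T}) (x : T) p : path (resrel B) x p -> path e x p && all (mem B) p.
Proof.
elim: p x => [|y p IH] x //= /andP[/andP[/andP[_ yB] exy] pp].
by rewrite exy yB /=; apply: IH.
Qed.

Lemma reach_path (B : {set T}) (x y : T) : x \in B -> connect (resrel B) x y ->
  exists p, [/\ path e x p, last x p = y, uniq (x :: p) & forall v, v \in x :: p -> v \in B].
Proof.
move=> xB /connectP[p0 pp ->]; case: (shortenP pp) => p' pp' U' _.
case/andP: (path_res pp') => pe al; exists p'; split => // v; rewrite inE => /orP[/eqP->//|vp].
by move/allP: al => /(_ v vp).
Qed.

Lemma res_path (B : {set T}) (x : T) p : x \in B -> path e x p -> all (mem B) p -> connect (resrel B) x (last x p).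
Proof.
move=> xB pp al; apply/connectP; exists p => //.
elim: p x xB pp al => [|y p IH] x xB //= /andP[exy pp] /andP[yB al].
by rewrite xB yB exy /=; apply: IH.
Qed.
End Restrict.

Section Main.
Variables (T : finType) (e : rel T) (S c : seq T).
Hypothesis loop : loopless e.
Hypothesis k3 : 3 <= size S.
Hypothesis deg : min_semideg_ge e ((#|T| + size S).+1 %/ 2 - 1).
Hypothesis lc : longest_S_cycle e S c.
Hypothesis cn : size c < #|T|.

Definition H := [set v | v \notin c].
Definition d := (#|T| + size S).+1 %/ 2 - 1.

Lemma dd : #|T| + size S <= 2 * d + 2.
Proof. rewrite /d; lia. Qed.

Lemma Uc : uniq c. Proof. by case: lc => [[[]]]. Qed.
Lemma Cc : cycle e c. Proof. by case: lc => [[[]]]. Qed.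
Lemma c2 : 2 <= size c. Proof. by case: lc => [[[]]]. Qed.

Lemma inH v : (v \in H) = (v \notin c). Proof. by rewrite inE. Qed.

Lemma nE : #|T| = size c + #|H|.
Proof.
rewrite -(cardsC [set v in c]) card_seq ?Uc //; congr (_ + _); apply: eq_card => v.
by rewrite !inE.
Qed.

Lemma insert_contra u x p : u \in c -> e u x -> path e x p -> uniq (x :: p) ->
  (forall v, v \in x :: p -> v \in H) -> e (last x p) (next c u) -> False.
Proof.
move=> uc eux px Ux xH el.
case: lc => [[[cs Ucc Ccc] [i sub]] maxc].
set c2 := rot i c in sub.
have U2 : uniq c2 by rewrite rot_uniq.
have C2 : cycle e c2 by rewrite rot_cycle.
have u2 : u \in c2 by rewrite mem_rot.
have N2 : next c2 u = next c u by rewrite next_rot.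
have [a [b E]] := splitE u2.
set X := x :: p.
set c' := a ++ u :: X ++ b.
have Xc v : v \in X -> v \notin c by move/xH; rewrite inH.
have Xc2 v : v \in X -> v \notin c2 by move=> /Xc; rewrite mem_rot.
have R' : rot (size a) c' = u :: X ++ (b ++ a) by rewrite /c' rot_size_cat /= -catA.
have R2 : rot (size a) c2 = u :: (b ++ a) by rewrite E rot_size_cat.
have Ur : uniq (u :: (b ++ a)) by rewrite -R2 rot_uniq.
have Cr : cycle e (u :: (b ++ a)) by rewrite -R2 rot_cycle.
have Nr : next (u :: (b ++ a)) u = next c u by rewrite -R2 next_rot.
have Sc' : S_cycle e S c'.
  split; last first.
    exists 0; rewrite rot0; apply: subseq_trans sub _; rewrite /c2 -/c2 E.
    apply: cat_subseq => //=; rewrite eqxx; exact: (suffix_subseq X b).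
  split.
  - rewrite /c' size_cat /= size_cat; move: cs; rewrite -(size_rot i c) -/c2 E size_cat /=; clear; lia.
  - have uX : u \notin X by apply/negP => uX; have := Xc2 u uX; rewrite u2.
    have [ur Ubaa] : u \notin b ++ a /\ uniq (b ++ a) by move: Ur => /andP.
    have hX : ~~ has (mem X) (b ++ a).
      apply/hasPn => v vba; apply/negP => vX.
      by have := Xc2 v vX; rewrite -(mem_rot (size a)) R2 inE vba orbT.
    by rewrite -(rot_uniq (size a)) R' cons_uniq mem_cat negb_or uX ur cat_uniq Ux Ubaa hX.
  - rewrite -(rot_cycle (size a)) R'.
    move: Cr Nr; case: (b ++ a) => [|v r].
      move=> _ Nr; rewrite /cycle /= cats0 rcons_path px eux /=.
      by move: el; rewrite -Nr /next /= eqxx.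
    rewrite /cycle /= => /andP[euv pr] Nr.
    rewrite eux /= rcons_cat cat_path px /= pr andbT.
    by move: el; rewrite -Nr /next /= eqxx.
have := maxc _ Sc'; rewrite /c' size_cat /= size_cat.
have : size c = size c2 by rewrite size_rot.
rewrite E size_cat /=; clear; lia.
Qed.

Definition NinC z := [set v | (v \in c) && e v z].
Definition NoutC w := [set v | (v \in c) && e w v].

Lemma cnt z p : z \in H -> path e z p -> uniq (z :: p) ->
  (forall v, v \in z :: p -> v \in H) -> #|NinC z| + #|NoutC (last z p)| <= size c.
Proof.
move=> zH pz Uz allH.
have inj : injective (next c) by apply: can_inj (prev_next Uc).
rewrite -(card_imset _ inj) -(card_seq Uc); apply: card_disj_sub.
- apply/subsetP => v /imsetP[u uN ->]; move: uN; rewrite /NinC inE => /andP[uc _]; by rewrite inE mem_next.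
- by apply/subsetP => v; rewrite /NoutC !inE => /andP[].
- rewrite disjoint_subset; apply/subsetP => v /imsetP[u uN ->]; move: uN; rewrite /NinC inE => /andP[uc euz].
  rewrite /NoutC !inE negb_and mem_next uc /=; apply/negP => el.
  exact: (insert_contra uc euz pz Uz allH el).
Qed.

Lemma outsplit x : outdeg e x = #|NoutC x| + outdeg_in e H x.
Proof.
rewrite /outdeg -(cardsID H [set y | e x y]) addnC; congr (_ + _); apply: eq_card => v;
  rewrite /NoutC /outdeg_in !inE; by case: (v \in c); case: (e x v).
Qed.

Lemma insplit x : indeg e x = #|NinC x| + indeg_in e H x.
Proof.
rewrite /indeg -(cardsID H [set y | e y x]) addnC; congr (_ + _); apply: eq_card => v;
  rewrite /NinC /indeg_in !inE; by case: (v \in c); case: (e v x).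
Qed.

Definition eH := resrel e H.

Lemma degd x : d <= outdeg e x /\ d <= indeg e x.
Proof. exact: deg. Qed.

Lemma cardD1le (X : {set T}) a : a \in X -> #|X :\ a| = #|X| - 1.
Proof. by move=> aX; rewrite (cardsD1 a X) aX add1n subn1. Qed.

Lemma single_in x : x \in H -> forall v, v \in [:: x] -> v \in H.
Proof. by move=> xH v; rewrite inE => /eqP->. Qed.

Lemma strongH x y : x \in H -> y \in H -> connect eH x y.
Proof.
move=> xH yH; apply: NNPP => nxy; move/negP: nxy => nxy.
set AH := [set v in H | connect eH x v].
set B := [set v in H | ~~ connect eH x v].
have hAB : #|AH| + #|B| = #|H|.
  rewrite -(cardsID [set v | connect eH x v] H); congr (_ + _); apply: eq_card => v; rewrite !inE.
    by rewrite andbC.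
  by rewrite andbC.
have xA : x \in AH by rewrite inE xH connect0.
have yB : y \in B by rewrite inE yH nxy.
have noAB a b : a \in AH -> b \in H -> e a b -> b \in AH.
  rewrite !inE => /andP[aH xa] bH eab; rewrite bH /=.
  apply: connect_trans xa _; apply: connect1; by rewrite /eH /= !inH aH bH eab.
have nl v : ~~ e v v by apply: loop.
have ksz := k3; have ddd := dd; have nEE := nE.
case: (classic (exists b a, [/\ b \in B, a \in AH & connect eH b a])).
  move=> [b [a [bB aA ba]]].
  have bH : b \in H by move: bB; rewrite inE => /andP[].
  have [p [pp lp Up Hp]] := reach_path bH ba.
  have := cnt bH pp Up Hp; rewrite lp => C1.
  have i1 : indeg_in e H b <= #|B :\ b|.
    apply: subset_leq_card; apply/subsetP => v; rewrite inE => /andP[vH evb]; have {}vH : v \in H by move: vH; rewrite ?inH.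
    rewrite in_setD1; apply/andP; split.
      by apply/negP => /eqP E; move: evb; rewrite E; move/negP: (nl b).
    rewrite inE vH /=; apply/negP => xv.
    have : b \in AH by apply: (noAB v) => //; rewrite inE vH xv.
    by rewrite inE; move: bB; rewrite inE => /andP[_ /negbTE ->]; rewrite andbF.
  have o1 : outdeg_in e H a <= #|AH :\ a|.
    apply: subset_leq_card; apply/subsetP => v; rewrite inE => /andP[vH eav]; have {}vH : v \in H by move: vH; rewrite ?inH.
    by rewrite in_setD1 (noAB a v) // andbT; apply/negP => /eqP E; move: eav; rewrite E; move/negP: (nl a).
  have := insplit b; have := outsplit a; have [_ db] := degd b; have [da _] := degd a.
  have := cardsD1 b B; rewrite bB; have := cardsD1 a AH; rewrite aA.
  move: C1 i1 o1 hAB ksz ddd nEE db da; clear; lia.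
move=> nb.
have nba b a : b \in B -> a \in AH -> ~~ connect eH b a.
  by move=> bB aA; apply/negP => ba; apply: nb; exists b, a.
have ix : indeg_in e H x <= #|AH :\ x|.
  apply: subset_leq_card; apply/subsetP => v; rewrite inE => /andP[vH evx]; have {}vH : v \in H by move: vH; rewrite ?inH.
  rewrite in_setD1; apply/andP; split; first by apply/negP => /eqP E; move: evx; rewrite E; move/negP: (nl x).
  case: (boolP (v \in AH)) => // vA.
  have vB : v \in B by move: vA; rewrite !inE; move: vH; rewrite inH => ->.
  by have := nba v x vB xA; rewrite (connect1 (e:=eH)) //= vH xH evx.
have ox : outdeg_in e H x <= #|AH :\ x|.
  apply: subset_leq_card; apply/subsetP => v; rewrite inE => /andP[vH exv]; have {}vH : v \in H by move: vH; rewrite ?inH.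
  by rewrite in_setD1 (noAB x v) // andbT; apply/negP => /eqP E; move: exv; rewrite E; move/negP: (nl x).
have iy : indeg_in e H y <= #|B :\ y|.
  apply: subset_leq_card; apply/subsetP => v; rewrite inE => /andP[vH evy]; have {}vH : v \in H by move: vH; rewrite ?inH.
  rewrite in_setD1; apply/andP; split; first by apply/negP => /eqP E; move: evy; rewrite E; move/negP: (nl y).
  case: (boolP (v \in AH)) => vA.
    by have := noAB v y vA yH evy; move: yB; rewrite !inE => /andP[_ /negbTE ->]; rewrite andbF.
  by move: vA; rewrite !inE; move: vH; rewrite inH => ->.
have oy : outdeg_in e H y <= #|B :\ y|.
  apply: subset_leq_card; apply/subsetP => v; rewrite inE => /andP[vH eyv]; have {}vH : v \in H by move: vH; rewrite ?inH.
  rewrite in_setD1; apply/andP; split; first by apply/negP => /eqP E; move: eyv; rewrite E; move/negP: (nl y).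
  case: (boolP (v \in AH)) => vA.
    by have := nba y v yB vA; rewrite (connect1 (e:=eH)) //= yH vH eyv.
  by move: vA; rewrite !inE; move: vH; rewrite inH => ->.
have Cx := @cnt x [::] xH (erefl true) (erefl true) (single_in xH).
have Cy := @cnt y [::] yH (erefl true) (erefl true) (single_in yH).
have := insplit x; have := outsplit x; have := insplit y; have := outsplit y.
have [dx1 dx2] := degd x; have [dy1 dy2] := degd y.
have := cardsD1 x AH; rewrite xA; have := cardsD1 y B; rewrite yB.
move: Cx Cy ix ox iy oy hAB ksz ddd nEE dx1 dx2 dy1 dy2; rewrite /=; clear; lia.
Qed.

Lemma degbound x y : x \in H -> y \in H -> #|H| + size S - 2 <= indeg_in e H x + outdeg_in e H y.
Proof.
move=> xH yH; have [p [pp lp Up Hp]] := reach_path xH (strongH xH yH).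
have := cnt xH pp Up Hp; rewrite lp => C.
have := insplit x; have := outsplit y; have [_ dx] := degd x; have [dy _] := degd y.
have ddd := dd; have nEE := nE; have ksz := k3.
move: C dx dy ddd nEE ksz; clear; lia.
Qed.

Lemma Hpos : 0 < #|H|.
Proof. have := nE; have := cn; clear; lia. Qed.

Lemma degH_le x : x \in H -> indeg_in e H x <= #|H| - 1 /\ outdeg_in e H x <= #|H| - 1.
Proof.
move=> xH; have E := cardsD1 x H; rewrite xH in E.
have nl v : ~~ e v v by apply: loop.
split.
  have : indeg_in e H x <= #|H :\ x|.
    apply: subset_leq_card; apply/subsetP => v; rewrite inE => /andP[vH evx].
    rewrite in_setD1; apply/andP; split; last by move: vH; rewrite ?inH.
    by apply/negP => /eqP Ev; move: evx; rewrite Ev; move/negP: (nl x).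
  move: E; clear; lia.
have : outdeg_in e H x <= #|H :\ x|.
  apply: subset_leq_card; apply/subsetP => v; rewrite inE => /andP[vH exv].
  rewrite in_setD1; apply/andP; split; last by move: vH; rewrite ?inH.
  by apply/negP => /eqP Ev; move: exv; rewrite Ev; move/negP: (nl x).
move: E; clear; lia.
Qed.

Lemma lowH : size S <= #|H|.
Proof.
have /card_gt0P [v vH] := Hpos.
have := degbound vH vH; have [i o] := degH_le vH; have := Hpos.
move: i o; clear; lia.
Qed.

Lemma upH : #|H| <= (#|T| - size S) %/ 2.
Proof.
suff : size S + #|H| <= size c.
  have := nE; clear; rewrite leq_divRL //; lia.
rewrite leqNgt; apply/negP => lt.
have cd : size c <= d by have := dd; have := nE; move: lt; clear; lia.
have cs := c2.
have [u uc] : exists u, u \in c by case: c cs => // u r _; exists u; rewrite mem_head.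
have nl v : ~~ e v v by apply: loop.
have Uc' := Uc.
have EC : #|[set v in c] :\ u| = size c - 1.
  by have := cardsD1 u [set v in c]; rewrite inE uc card_seq //; clear; lia.
have [x [xH eux]] : exists x, x \in H /\ e u x.
  have : #|NoutC u| <= size c - 1.
    rewrite -EC; apply: subset_leq_card; apply/subsetP => v; rewrite !inE => /andP[vc euv].
    rewrite vc andbT; by apply/negP => /eqP Ev; move: euv; rewrite Ev; move/negP: (nl u).
  have := outsplit u; have [du _] := degd u => E1 E2.
  have : 0 < outdeg_in e H u by move: E1 E2 du cd cs; clear; lia.
  case/card_gt0P => x; rewrite inE => /andP[xH ex]; exists x; split => //; move: xH; rewrite ?inH.
set w := next c u.
have wc : w \in c by rewrite mem_next.
have EW : #|[set v in c] :\ w| = size c - 1.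
  by have := cardsD1 w [set v in c]; rewrite inE wc card_seq //; clear; lia.
have [y [yH eyw]] : exists y, y \in H /\ e y w.
  have : #|NinC w| <= size c - 1.
    rewrite -EW; apply: subset_leq_card; apply/subsetP => v; rewrite !inE => /andP[vc evw].
    rewrite vc andbT; by apply/negP => /eqP Ev; move: evw; rewrite Ev; move/negP: (nl w).
  have := insplit w; have [_ dw] := degd w => E1 E2.
  have : 0 < indeg_in e H w by move: E1 E2 dw cd cs; clear; lia.
  case/card_gt0P => y; rewrite inE => /andP[yH ey]; exists y; split => //; move: yH; rewrite ?inH.
have [p [pp lp Up Hp]] := reach_path xH (strongH xH yH).
by apply: (insert_contra uc eux pp Up Hp); rewrite lp.
Qed.

Lemma strong_del (X : {set T}) : X \subset H -> #|X| <= 2 -> strong_on e (H :\: X).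
Proof.
move=> XH X2 u v uB vB.
set B := H :\: X.
set eB := resrel e B.
case: (boolP (connect eB u v)) => [uv|nuv].
  have [p [pp lp Up Hp]] := reach_path uB uv.
  by exists p; split => //; apply/allP => z zp; apply: Hp; rewrite inE zp orbT.
exfalso.
have nl z : ~~ e z z by apply: loop.
set A' := [set w in B | connect eB u w].
set B' := [set w in B | ~~ connect eB u w].
have hAB : #|A'| + #|B'| = #|H| - #|X|.
  have : #|B| = #|H| - #|X| by rewrite /B cardsD (setIidPr XH).
  move=> <-; rewrite -(cardsID [set w | connect eB u w] B); congr (_ + _); apply: eq_card => w; rewrite !inE.
    by rewrite andbC.
  by rewrite andbC.
have uA : u \in A' by rewrite inE uB connect0.
have vB' : v \in B' by rewrite inE vB nuv.
have uH : u \in H by move: uB; rewrite in_setD => /andP[].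
have vH : v \in H by move: vB; rewrite in_setD => /andP[].
have iv : indeg_in e H v <= #|B' :\ v| + #|X|.
  apply: leq_trans (card_U_le _ _); apply: subset_leq_card; apply/subsetP => y.
  rewrite inE => /andP[yH evy]; have {}yH : y \in H by move: yH; rewrite ?inH.
  case: (boolP (y \in X)) => yX; first by rewrite in_setU yX orbT.
  have yB : y \in B by rewrite in_setD yX yH.
  rewrite in_setU in_setD1; apply/orP; left; apply/andP; split.
    by apply/negP => /eqP Ev; move: evy; rewrite Ev; move/negP: (nl v).
  rewrite inE yB /=; apply/negP => uy; move/negP: nuv; apply.
  apply: connect_trans uy _; apply: connect1; by rewrite /eB /= yB vB evy.
have ou : outdeg_in e H u <= #|A' :\ u| + #|X|.
  apply: leq_trans (card_U_le _ _); apply: subset_leq_card; apply/subsetP => y.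
  rewrite inE => /andP[yH euy]; have {}yH : y \in H by move: yH; rewrite ?inH.
  case: (boolP (y \in X)) => yX; first by rewrite in_setU yX orbT.
  have yB : y \in B by rewrite in_setD yX yH.
  rewrite in_setU in_setD1; apply/orP; left; apply/andP; split.
    by apply/negP => /eqP Ev; move: euy; rewrite Ev; move/negP: (nl u).
  by rewrite inE yB /=; apply: connect1; rewrite /eB /= uB yB euy.
have := degbound vH uH; have := cardsD1 u A'; rewrite uA; have := cardsD1 v B'; rewrite vB'.
have ksz := k3; have XHc : #|X| <= #|H| by apply: subset_leq_card.
move: iv ou hAB X2 ksz XHc; clear; lia.
Qed.

Lemma ham_conn : ham_connected_on e H.
Proof.
move=> x y xH yH xy.
have nl z : ~~ e z z by apply: loop.
set A := H :\ y.
pose f := [rel u v | (u != v) && (if v == x then e u y else e u v)].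
have floop v : ~~ f v v by rewrite /= eqxx.
have xA : x \in A by rewrite in_setD1 xy xH.
have inA v : v \in A -> v \in H /\ v != y by rewrite in_setD1 => /andP[].
have outle b : b \in A -> outdeg_in e H b <= (outdeg_in f A b).+1.
  move=> bA; have [bH by'] := inA b bA.
  case: (boolP (b == x)) => [/eqP bx|bx].
    subst b; rewrite /outdeg_in (cardsD1 y) -add1n; apply: leq_add (leq_b1 _) _.
    apply: subset_leq_card; apply/subsetP => v; rewrite in_setD1 inE => /andP[vy /andP[vH exv]].
    have vx : x != v by apply/negP => /eqP Ev; move: exv; rewrite -Ev; move/negP: (nl x).
    rewrite inE in_setD1 vy vH /= vx /=; rewrite eq_sym (negbTE vx); exact: exv.
  set M := [set v in H | e b v] :\ x.
  pose g v := if v == y then x else v.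
  have ginj : {in M &, injective g}.
    move=> v1 v2; rewrite /M !in_setD1 => /andP[v1x _] /andP[v2x _]; rewrite /g.
    case: (v1 =P y) => [->|_]; case: (v2 =P y) => [->|_] //.
      by move=> E; move: v2x; rewrite -E eqxx.
    by move=> E; move: v1x; rewrite E eqxx.
  have sub : g @: M \subset [set v in A | f b v].
    apply/subsetP => z /imsetP[v]; rewrite /M in_setD1 inE => /andP[vx /andP[vH ebv]] ->.
    rewrite /g; case: (v =P y) => [Ev|/eqP vy].
      by rewrite inE xA /= eqxx bx -Ev ebv.
    rewrite inE in_setD1 vy vH /= (negbTE vx) ebv andbT.
    by apply/negP => /eqP Ev; move: ebv; rewrite Ev; move/negP: (nl v).
  have := subset_leq_card sub; rewrite card_in_imset // => HM.
  rewrite /outdeg_in (cardsD1 x [set v in H | e b v]) -/M.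
  by apply: leq_add (leq_b1 _) HM.
have inx : indeg_in e H y <= (indeg_in f A x).+1.
  rewrite /indeg_in (cardsD1 x) -add1n; apply: leq_add (leq_b1 _) _.
  apply: subset_leq_card; apply/subsetP => v; rewrite in_setD1 inE => /andP[vx /andP[vH evy]].
  have vy : v != y by apply/negP => /eqP Ev; move: evy; rewrite Ev; move/negP: (nl y).
  by rewrite inE in_setD1 vy vH /= vx eqxx.
have ina a : a \in A -> a != x -> indeg_in e H a <= (indeg_in f A a).+1.
  move=> aA ax; rewrite /indeg_in (cardsD1 y) -add1n; apply: leq_add (leq_b1 _) _.
  apply: subset_leq_card; apply/subsetP => v; rewrite in_setD1 inE => /andP[vy /andP[vH eva]].
  have va : v != a by apply/negP => /eqP Ev; move: eva; rewrite Ev; move/negP: (nl a).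
  by rewrite inE in_setD1 vy vH /= va (negbTE ax).
have cA : #|A| = #|H| - 1 by have := cardsD1 y H; rewrite yH -/A; clear; lia.
have ksz := k3.
have Adeg a b : a \in A -> b \in A -> #|A| <= indeg_in f A a + outdeg_in f A b.
  move=> aA bA; have [aH _] := inA a aA; have [bH _] := inA b bA.
  have ob := outle b bA.
  case: (boolP (a == x)) => [/eqP ax|ax].
    subst a; have := degbound yH bH; move: ob inx cA ksz; clear; lia.
  have := degbound aH bH; have := ina a aA ax; move: ob cA ksz; clear; lia.
have [s [Us Cs Ms]] := ham_cycle floop Adeg.
have xs : x \in s by rewrite Ms.
have [b E] := rot_i xs.
have Ub : uniq (x :: b) by rewrite -E rot_uniq.
have Cb : cycle f (x :: b) by rewrite -E rot_cycle.
have Mb v : (v \in x :: b) = (v \in A) by rewrite -E mem_rot Ms.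
have xb : x \notin b by case/andP: Ub.
have conv : forall (b' : seq T) u, x \notin b' -> path f u (rcons b' x) -> path e u (rcons b' y).
  elim => [|v b' IH] u /=.
    by rewrite eqxx !andbT => _ /andP[].
  rewrite inE negb_or => /andP[xv xb'] /andP[/andP[_ fuv] pv].
  rewrite eq_sym (negbTE xv) in fuv; rewrite fuv /=; exact: IH.
exists (rcons b y); split.
- exact: (conv b x xb Cb).
- by rewrite last_rcons.
- rewrite -rcons_cons rcons_uniq Ub andbT Mb in_setD1 eqxx //.
- move=> z; rewrite -rcons_cons mem_rcons inE Mb in_setD1.
  by case: (z =P y) => [->|] //=; rewrite yH.
Qed.

End Main.

Unset Implicit Arguments.

Theorem lemma6 (T : finType) (e : rel T) (S c : seq T) :
  loopless e ->
  3 <= size S ->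
  uniq S ->
  min_semideg_ge e ((#|T| + size S).+1 %/ 2 - 1) ->
  longest_S_cycle e S c ->
  size c < #|T| ->
  let H := [set v | v \notin c] in
  [/\ ham_connected_on e H,
      (forall x y, x \in H -> y \in H ->
         #|H| + size S - 2 <= indeg_in e H x + outdeg_in e H y),
      (forall X : {set T}, X \subset H -> #|X| <= 2 -> strong_on e (H :\: X))
    & size S <= #|H| <= (#|T| - size S) %/ 2].
Proof.
move=> lp k3 _ dg lc cn H.
split.
- exact: (ham_conn lp k3 dg lc cn).
- exact: (degbound lp k3 dg lc cn).
- exact: (strong_del lp k3 dg lc cn).
- by rewrite (lowH lp k3 dg lc cn) (upH lp k3 dg lc cn).
Qed.
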